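(* Let $N_1,N_3,J\in\mathbb{N}$ and let $\hat{\mathcal{X}}\in\mathbb{R}^{N_1\times J\times N_3}$ be a real third-order tensor with frontal slices $\hat{\mathcal{X}}_j\in\mathbb{R}^{N_1\times N_3}$ ($j=1,\dots,J$), where $(\hat{\mathcal{X}}_j)_{ik}=\hat{\mathcal{X}}_{ijk}$. Consider all factorizations of the form $\hat{\mathcal{X}}_j=\mathbf{U}\mathbf{R}_j\mathbf{V}^\top$ for all $j=1,\dots,J$, where $D\in\mathbb{N}$ is arbitrary, $\mathbf{U}\in\mathbb{R}^{N_1\times D}$, $\mathbf{V}\in\mathbb{R}^{N_3\times D}$, and each $\mathbf{R}_j\in\mathbb{R}^{D\times D}$ is a real diagonal matrix. Then $$\min_{\substack{D,\ \mathbf{U},\mathbf{V},\mathbf{R}_1,\dots,\mathbf{R}_J:\\ \hat{\mathcal{X}}_j=\mathbf{U}\mathbf{R}_j\mathbf{V}^\top\ \forall j}}\ \frac{1}{4\sqrt{J}}\sum_{j=1}^{J}\Big(\|\mathbf{U}\mathbf{R}_j\|_F^2+\|\mathbf{V}\|_F^2+\|\mathbf{V}\mathbf{R}_j^\top\|_F^2+\|\mathbf{U}\|_F^2\Big)=\|\hat{\mathcal{X}}\|_*.$$ Moreover, every factorization attaining this minimum satisfies, for every $d\in\{1,\dots,D\}$, $$\|\mathbf{u}_{:d}\|_2\|\mathbf{r}_{:d}\|_2=\sqrt{J}\,\|\mathbf{v}_{:d}\|_2\quad\text{and}\quad \|\mathbf{v}_{:d}\|_2\|\mathbf{r}_{:d}\|_2=\sqrt{J}\,\|\mathbf{u}_{:d}\|_2,$$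 where $\mathbf{u}_{:d}$, $\mathbf{v}_{:d}$ are the $d$-th columns of $\mathbf{U}$, $\mathbf{V}$, and $\mathbf{r}_{:d}\in\mathbb{R}^J$ is the $d$-th column of the matrix $\widetilde{\mathbf{R}}\in\mathbb{R}^{J\times D}$ defined by $\widetilde{\mathbf{R}}(j,d)=\mathbf{R}_j(d,d)$.
   Context: $\|\cdot\|_F$ is the Frobenius norm and $\|\cdot\|_2$ the Euclidean norm. The tensor nuclear 2-norm of a real tensor $\mathcal{A}\in\mathbb{R}^{n_1}\otimes\mathbb{R}^{n_2}\otimes\mathbb{R}^{n_3}$ is $\|\mathcal{A}\|_*=\min\big\{\sum_{i=1}^r\|\mathbf{a}_{1,i}\|_2\|\mathbf{a}_{2,i}\|_2\|\mathbf{a}_{3,i}\|_2:\ \mathcal{A}=\sum_{i=1}^r\mathbf{a}_{1,i}\otimes\mathbf{a}_{2,i}\otimes\mathbf{a}_{3,i},\ r\in\mathbb{N},\ \mathbf{a}_{k,i}\in\mathbb{R}^{n_k}\big\}$, where $\otimes$ is the outer product. Note that $\hat{\mathcal{X}}_j=\mathbf{U}\mathbf{R}_j\mathbf{V}^\top$ for all $j$ is equivalent to $\hat{\mathcal{X}}=\sum_{d=1}^D\mathbf{u}_{:d}\otimes\mathbf{r}_{:d}\otimes\mathbf{v}_{:d}$. *)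

(* Defs.v *)
From HB Require Import structures.
From mathcomp Require Import all_boot all_order all_algebra.
From mathcomp Require Import all_classical all_reals.
Set Implicit Arguments. Unset Strict Implicit. Unset Printing Implicit Defensive.
Import Order.TTheory GRing.Theory Num.Theory.
Local Open Scope ring_scope.
Local Open Scope classical_set_scope.

Definition tensor3 (R : realType) (n1 n2 n3 : nat) := 'I_n1 -> 'I_n2 -> 'I_n3 -> R.

Definition vnorm2 (R : realType) (n : nat) (a : 'I_n -> R) : R :=
  Num.sqrt (\sum_(i < n) a i ^+ 2).

Definition frob2 (R : realType) (m n : nat) (A : 'M[R]_(m, n)) : R :=
  \sum_(i < m) \sum_(j < n) A i j ^+ 2.

Definition is_cp_decomp (R : realType) (n1 n2 n3 r : nat) (X : tensor3 R n1 n2 n3)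
  (a1 : 'I_r -> 'I_n1 -> R) (a2 : 'I_r -> 'I_n2 -> R) (a3 : 'I_r -> 'I_n3 -> R) : Prop :=
  forall i j k, X i j k = \sum_(l < r) a1 l i * a2 l j * a3 l k.

(* Tensor nuclear 2-norm: the minimum (here: infimum; the minimum is attained)
   of sum_l ||a1_l|| ||a2_l|| ||a3_l|| over all rank-one decompositions. *)
Definition tnuclear (R : realType) (n1 n2 n3 : nat) (X : tensor3 R n1 n2 n3) : R :=
  inf [set c : R | exists (r : nat) (a1 : 'I_r -> 'I_n1 -> R) (a2 : 'I_r -> 'I_n2 -> R)
                         (a3 : 'I_r -> 'I_n3 -> R),
         is_cp_decomp X a1 a2 a3 /\
         c = \sum_(l < r) vnorm2 (a1 l) * vnorm2 (a2 l) * vnorm2 (a3 l)].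

Definition slice (R : realType) (n1 J n3 : nat) (X : tensor3 R n1 J n3) (j : 'I_J)
  : 'M[R]_(n1, n3) := \matrix_(i, k) X i j k.

Definition is_factorization (R : realType) (n1 J n3 D : nat) (X : tensor3 R n1 J n3)
  (U : 'M[R]_(n1, D)) (V : 'M[R]_(n3, D)) (Rj : 'I_J -> 'M[R]_D) : Prop :=
  (forall j, is_diag_mx (Rj j)) /\ (forall j, slice X j = U *m Rj j *m V^T).

Definition objective (R : realType) (n1 J n3 D : nat)
  (U : 'M[R]_(n1, D)) (V : 'M[R]_(n3, D)) (Rj : 'I_J -> 'M[R]_D) : R :=
  (4 * Num.sqrt (J%:R))^-1 *
  \sum_(j < J) (frob2 (U *m Rj j) + frob2 V + frob2 (V *m (Rj j)^T) + frob2 U).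

Definition colnorm (R : realType) (m D : nat) (A : 'M[R]_(m, D)) (d : 'I_D) : R :=
  vnorm2 (fun i => A i d).
Definition rnorm (R : realType) (J D : nat) (Rj : 'I_J -> 'M[R]_D) (d : 'I_D) : R :=
  vnorm2 (fun j => Rj j d d).

(* Main.v *)
Require Import Defs.
From HB Require Import structures.
From mathcomp Require Import all_boot all_order all_algebra.
From mathcomp Require Import all_classical all_reals all_analysis.
From mathcomp Require Import ring lra.
Import Order.TTheory GRing.Theory Num.Theory.
Import numFieldNormedType.Exports.
Set Implicit Arguments. Unset Strict Implicit. Unset Printing Implicit Defensive.
Local Open Scope ring_scope.
Local Open Scope classical_set_scope.

Lemma fst_cont {X Y : topologicalType} : continuous (@fst X Y).
Proof.
case=> a b W /= Wa; exists (W, setT) => /=; first by split => //; exact: filterT.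
by case=> x y [].
Qed.
Lemma snd_cont {X Y : topologicalType} : continuous (@snd X Y).
Proof.
case=> a b W /= Wa; exists (setT, W) => /=; first by split => //; exact: filterT.
by case=> x y [].
Qed.
Lemma coordT (T : topologicalType) m n i j :
  continuous (fun M : 'M[T]_(m, n) => M i j).
Proof.
move=> M A /= hA.
exists (fun i' j' => if (i' == i) && (j' == j) then A else setT).
  move=> i' j'; case: ifP => [/andP[/eqP-> /eqP->]//|_]; exact: filterT.
by move=> N /(_ i j); rewrite !eqxx.
Qed.

Section Cont.
Variables (R : realType) (U : topologicalType).
Lemma cont_comp (S W : topologicalType) (f : U -> S) (g : S -> W) :
  continuous f -> continuous g -> continuous (fun x => g (f x)).
Proof. by move=> hf hg x; apply: (continuous_comp (hf x) (hg (f x))). Qed.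
Lemma cM (f g : U -> R) : continuous f -> continuous g -> continuous (fun x => f x * g x).
Proof. by move=> hf hg x; exact: continuousM (hf x) (hg x). Qed.
Lemma cB (f g : U -> R) : continuous f -> continuous g -> continuous (fun x => f x - g x).
Proof. by move=> hf hg x; exact: continuousB (hf x) (hg x). Qed.
Lemma cD (f g : U -> R) : continuous f -> continuous g -> continuous (fun x => f x + g x).
Proof. by move=> hf hg x; exact: continuousD (hf x) (hg x). Qed.
Lemma cC (c : R) : continuous (fun _ : U => c).
Proof. exact: cst_continuous. Qed.
Lemma cS (I : Type) (s : seq I) (P : pred I) (F : I -> U -> R) :
  (forall i, continuous (F i)) -> continuous (fun x => \sum_(i <- s | P i) F i x).
Proof.
move=> h; elim: s => [|a s IH].
  rewrite (_ : (fun x => _) = fun _ => 0); first exact: cC.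
  by apply: funext => x; rewrite big_nil.
rewrite (_ : (fun x => _) = fun x => (if P a then F a x else 0) + \sum_(i <- s | P i) F i x).
  by apply: cD => //; case: (P a) => //; exact: cC.
by apply: funext => x; rewrite big_cons; case: (P a) => //; rewrite add0r.
Qed.
Lemma cSq (f : U -> R) : continuous f -> continuous (fun x => f x ^+ 2).
Proof. by move=> h; rewrite (_ : (fun x => _) = fun x => f x * f x); [exact: cM | apply: funext => x; rewrite expr2]. Qed.
Lemma cSqrt (f : U -> R) : continuous f -> continuous (fun x => Num.sqrt (f x)).
Proof. by move=> h; apply: cont_comp h _; exact: sqrt_continuous. Qed.
End Cont.
Section Basics.
Variable R : realType.

Lemma vnorm2_ge0 n (a : 'I_n -> R) : 0 <= vnorm2 a.
Proof. exact: sqrtr_ge0. Qed.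

Lemma sumsq_ge0 n (a : 'I_n -> R) : 0 <= \sum_i a i ^+ 2.
Proof. by apply: sumr_ge0 => i _; exact: sqr_ge0. Qed.

Lemma vnorm2_sq n (a : 'I_n -> R) : vnorm2 a ^+ 2 = \sum_i a i ^+ 2.
Proof. by rewrite /vnorm2 sqr_sqrtr // sumsq_ge0. Qed.

Lemma vnorm2_scale n g (a : 'I_n -> R) :
  vnorm2 (fun i => g * a i) = `|g| * vnorm2 a.
Proof.
rewrite /vnorm2 (eq_bigr (fun i => g ^+ 2 * a i ^+ 2)) => [|i _]; last by rewrite exprMn.
by rewrite -mulr_sumr sqrtrM ?sqr_ge0 // sqrtr_sqr.
Qed.

Lemma vnorm2_eq0 n (a : 'I_n -> R) : vnorm2 a = 0 -> forall i, a i = 0.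
Proof.
move=> h i.
have h2 : \sum_i a i ^+ 2 = 0 by rewrite -vnorm2_sq h expr2 mul0r.
have := @psumr_eq0P _ _ predT (fun i => a i ^+ 2) (fun i _ => sqr_ge0 (a i)) h2 i erefl.
by move/eqP; rewrite sqrf_eq0 => /eqP.
Qed.

Lemma vnorm2_0 n : vnorm2 (fun _ : 'I_n => 0 : R) = 0.
Proof. by rewrite /vnorm2 big1 ?sqrtr0 // => i _; rewrite expr2 mul0r. Qed.

Lemma vnorm2_ord0 (a : 'I_0 -> R) : vnorm2 a = 0.
Proof. by rewrite /vnorm2 big_ord0 sqrtr0. Qed.

Lemma coord_le_vnorm2 n (a : 'I_n -> R) i : `|a i| <= vnorm2 a.
Proof.
rewrite -sqrtr_sqr /vnorm2 ler_sqrt ?sumsq_ge0 //.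
by rewrite (bigD1 i) //= lerDl; apply: sumr_ge0 => j _; exact: sqr_ge0.
Qed.

Definition dcost n1 n2 n3 r (a1 : 'I_r -> 'I_n1 -> R) (a2 : 'I_r -> 'I_n2 -> R)
  (a3 : 'I_r -> 'I_n3 -> R) : R :=
  \sum_(l < r) vnorm2 (a1 l) * vnorm2 (a2 l) * vnorm2 (a3 l).

Lemma dcost_ge0 n1 n2 n3 r (a1 : 'I_r -> 'I_n1 -> R) (a2 : 'I_r -> 'I_n2 -> R)
  (a3 : 'I_r -> 'I_n3 -> R) : 0 <= dcost a1 a2 a3.
Proof. by apply: sumr_ge0 => l _; rewrite !mulr_ge0 ?vnorm2_ge0. Qed.

Lemma tnuc_lbound n1 n2 n3 (X : tensor3 R n1 n2 n3) :
  has_lbound [set c : R | exists (r : nat) (a1 : 'I_r -> 'I_n1 -> R) (a2 : 'I_r -> 'I_n2 -> R)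
                         (a3 : 'I_r -> 'I_n3 -> R),
         is_cp_decomp X a1 a2 a3 /\
         c = \sum_(l < r) vnorm2 (a1 l) * vnorm2 (a2 l) * vnorm2 (a3 l)].
Proof. by exists 0 => c [r [a1 [a2 [a3 [_ ->]]]]]; exact: dcost_ge0. Qed.

Lemma tnuc_le n1 n2 n3 (X : tensor3 R n1 n2 n3) r a1 a2 a3 :
  @is_cp_decomp R n1 n2 n3 r X a1 a2 a3 -> tnuclear X <= dcost a1 a2 a3.
Proof.
move=> h; apply: (ge_inf (tnuc_lbound X)).
by exists r, a1, a2, a3.
Qed.

End Basics.

Section Fact.
Variables (R : realType) (N1 J N3 D : nat).
Variables (U : 'M[R]_(N1, D)) (V : 'M[R]_(N3, D)) (Rj : 'I_J -> 'M[R]_D).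
Hypothesis hdiag : forall j, is_diag_mx (Rj j).

Lemma mulURj j i d : (U *m Rj j) i d = U i d * Rj j d d.
Proof.
rewrite !mxE (bigD1 d) //= big1 ?addr0 // => e ne.
by rewrite (is_diag_mxP (hdiag j)) ?mulr0.
Qed.

Lemma mulVRjT j k d : (V *m (Rj j)^T) k d = V k d * Rj j d d.
Proof.
rewrite !mxE (bigD1 d) //= mxE big1 ?addr0 // => e ne.
by rewrite mxE (is_diag_mxP (hdiag j)) ?mulr0 // eq_sym.
Qed.

Lemma frob2_col m (A : 'M[R]_(m, D)) : frob2 A = \sum_d colnorm A d ^+ 2.
Proof. by rewrite /frob2 exchange_big; apply: eq_bigr => d _; rewrite vnorm2_sq. Qed.

Lemma frob2_UR j : frob2 (U *m Rj j) = \sum_d colnorm U d ^+ 2 * Rj j d d ^+ 2.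
Proof.
rewrite /frob2 exchange_big; apply: eq_bigr => d _.
by rewrite vnorm2_sq mulr_suml; apply: eq_bigr => i _; rewrite mulURj exprMn.
Qed.

Lemma frob2_VR j : frob2 (V *m (Rj j)^T) = \sum_d colnorm V d ^+ 2 * Rj j d d ^+ 2.
Proof.
rewrite /frob2 exchange_big; apply: eq_bigr => d _.
by rewrite vnorm2_sq mulr_suml; apply: eq_bigr => i _; rewrite mulVRjT exprMn.
Qed.

Definition Fterm (s : R) d :=
  colnorm U d ^+ 2 * rnorm Rj d ^+ 2 + s ^+ 2 * colnorm V d ^+ 2 +
  colnorm V d ^+ 2 * rnorm Rj d ^+ 2 + s ^+ 2 * colnorm U d ^+ 2.

Lemma obj_formula :
  objective U V Rj = (4 * Num.sqrt (J%:R))^-1 * \sum_d Fterm (Num.sqrt (J%:R)) d.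
Proof.
rewrite /objective; congr (_ * _).
rewrite /Fterm sqr_sqrtr ?ler0n //.
under eq_bigr do rewrite frob2_UR frob2_VR !frob2_col -!big_split /=.
rewrite exchange_big; apply: eq_bigr => d _ /=.
rewrite !big_split /= !sumr_const card_ord.
rewrite -!mulr_sumr /rnorm vnorm2_sq.
by rewrite !mulr_natl.
Qed.

Lemma Fterm_id s d :
  Fterm s d = 4 * s * (colnorm U d * rnorm Rj d * colnorm V d) +
    ((colnorm U d * rnorm Rj d - s * colnorm V d) ^+ 2 +
     (colnorm V d * rnorm Rj d - s * colnorm U d) ^+ 2).
Proof.
rewrite /Fterm.
move: (colnorm U d) (rnorm Rj d) (colnorm V d) => x y z.
ring.
Qed.

End Fact.

Section Main.
Variable R : realType.

Lemma vnorm2_J0 J (a : 'I_J -> R) : J = 0%N -> vnorm2 a = 0.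
Proof.
by move=> hJ; subst J; rewrite vnorm2_ord0.
Qed.

Lemma fact_decomp N1 J N3 D (X : tensor3 R N1 J N3) U V (Rj : 'I_J -> 'M[R]_D) :
  is_factorization X U V Rj ->
  is_cp_decomp X (fun d i => U i d) (fun d j => Rj j d d) (fun d k => V k d).
Proof.
move=> [hd hs] i j k.
have := congr1 (fun M : 'M[R]_(N1, N3) => M i k) (hs j); rewrite /slice mxE /= => ->.
rewrite mxE; apply: eq_bigr => d _. by rewrite (mulURj _ hd) mxE.
Qed.

Lemma cost_le_obj N1 J N3 D (X : tensor3 R N1 J N3) U V (Rj : 'I_J -> 'M[R]_D) :
  is_factorization X U V Rj ->
  \sum_d colnorm U d * rnorm Rj d * colnorm V d <= objective U V Rj.
Proof.
move=> hf; have [hJ|hJ] := eqVneq J 0%N.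
  have s0 : Num.sqrt (J%:R : R) = 0 by rewrite hJ sqrtr0.
  rewrite /objective s0 mulr0 invr0 mul0r big1 // => d _.
  by rewrite /rnorm vnorm2_J0 // mulr0 mul0r.
have s0 : 0 < Num.sqrt (J%:R : R) by rewrite sqrtr_gt0 ltr0n lt0n.
rewrite (obj_formula _ _ hf.1).
rewrite (eq_bigr _ (fun d _ => Fterm_id U V Rj _ d)).
rewrite big_split /= -mulr_sumr mulrDr mulrA mulVf ?mul1r; last first.
  by rewrite mulf_neq0 // ?gt_eqF.
rewrite lerDl; apply: mulr_ge0; first by rewrite invr_ge0 mulr_ge0 // ltW.
by apply: sumr_ge0 => d _; rewrite addr_ge0 ?sqr_ge0.
Qed.

End Main.

Section Main2.
Variable R : realType.

Lemma balanced N1 J N3 D (X : tensor3 R N1 J N3) U V (Rj : 'I_J -> 'M[R]_D) :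
  is_factorization X U V Rj -> objective U V Rj = tnuclear X ->
  forall d, colnorm U d * rnorm Rj d = Num.sqrt (J%:R) * colnorm V d /\
            colnorm V d * rnorm Rj d = Num.sqrt (J%:R) * colnorm U d.
Proof.
move=> hf ho d.
have [hJ|hJ] := eqVneq J 0%N.
  have s0 : Num.sqrt (J%:R : R) = 0 by rewrite hJ sqrtr0.
  by rewrite s0 /rnorm vnorm2_J0 // !mulr0 !mul0r.
have s0 : 0 < Num.sqrt (J%:R : R) by rewrite sqrtr_gt0 ltr0n lt0n.
have h1 : \sum_d colnorm U d * rnorm Rj d * colnorm V d = objective U V Rj.
  apply/le_anti; rewrite (cost_le_obj hf) /= ho; exact: (tnuc_le (fact_decomp hf)).
move: h1; rewrite (obj_formula _ _ hf.1).
rewrite (eq_bigr _ (fun d _ => Fterm_id U V Rj _ d)).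
rewrite big_split /= -mulr_sumr mulrDr mulrA mulVf ?mul1r; last first.
  by rewrite mulf_neq0 // ?gt_eqF.
rewrite -{1}[X in X = _]addr0 => /addrI /esym hs0.
have hs : \sum_(i < D)
   ((colnorm U i * rnorm Rj i - Num.sqrt (J%:R) * colnorm V i) ^+ 2 +
    (colnorm V i * rnorm Rj i - Num.sqrt (J%:R) * colnorm U i) ^+ 2) = 0.
  apply/eqP; move/eqP: hs0; rewrite mulf_eq0 invr_eq0 mulf_eq0 (gt_eqF s0) orbF.
  by case/orP => //; rewrite pnatr_eq0.
have := @psumr_eq0P _ _ predT _ (fun d _ => addr_ge0 (sqr_ge0 _) (sqr_ge0 _)) hs d erefl.
move/eqP; rewrite paddr_eq0 ?sqr_ge0 // !sqrf_eq0 !subr_eq0 => /andP[/eqP -> /eqP ->].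
by [].
Qed.

End Main2.

Lemma split_lsh m n (i : 'I_m) : fintype.split (lshift n i) = inl i.
Proof. exact: (unsplitK (inl i)). Qed.
Lemma split_rsh m n (i : 'I_n) : fintype.split (rshift m i) = inr i.
Proof. exact: (unsplitK (inr i)). Qed.

Section Topo.
Variables (R : realType) (N1 J N3 L : nat) (X : tensor3 R N1 J N3) (Cb : R).

Definition good (a1 : 'I_L -> 'I_N1 -> R) (a2 : 'I_L -> 'I_J -> R) (a3 : 'I_L -> 'I_N3 -> R) :=
  is_cp_decomp X a1 a2 a3 /\ (forall l i, `|a1 l i| <= Cb) /\
  (forall l j, `|a2 l j| <= Cb) /\ (forall l k, `|a3 l k| <= Cb).

Local Notation M := (N1 + J + N3)%N.
Let g1 (v : 'rV['rV[R]_M]_L) l i := v ord0 l ord0 (lshift N3 (lshift J i)).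
Let g2 (v : 'rV['rV[R]_M]_L) l j := v ord0 l ord0 (lshift N3 (rshift N1 j)).
Let g3 (v : 'rV['rV[R]_M]_L) l k := v ord0 l ord0 (rshift (N1 + J) k).

Let cgen l t : continuous (fun v : 'rV['rV[R]_M]_L => v ord0 l ord0 t).
Proof.
apply: (cont_comp (f := fun v : 'rV['rV[R]_M]_L => v ord0 l) (g := fun a : 'rV[R]_M => a ord0 t)).
  exact: coordT.
exact: coordT.
Qed.

Let h (v : 'rV['rV[R]_M]_L) := \sum_i \sum_j \sum_k
   (X i j k - \sum_l g1 v l i * g2 v l j * g3 v l k) ^+ 2.

Let ch : continuous h.
Proof.
apply: cS => i; apply: cS => j; apply: cS => k; apply: cSq; apply: cB; first exact: cC.
by apply: cS => l; apply: cM; [apply: cM|]; apply: cgen.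
Qed.

Let f (v : 'rV['rV[R]_M]_L) := dcost (g1 v) (g2 v) (g3 v).

Let cf : continuous f.
Proof.
rewrite /f /dcost /vnorm2; apply: cS => l.
by apply: cM; [apply: cM|]; apply: cSqrt; apply: cS => i; apply: cSq; apply: cgen.
Qed.

Let B := [set a : 'rV[R]_M | forall t, `[-Cb, Cb]%classic (a ord0 t)].
Let Bc : compact B.
Proof. by apply: (rV_compact (A := fun _ => `[-Cb, Cb]%classic)) => i; exact: segment_compact. Qed.

Let K := [set v : 'rV['rV[R]_M]_L | forall l, B (v ord0 l)].
Let Kc : compact K.
Proof. by apply: (rV_compact (A := fun _ => B)) => l. Qed.

Let E := h @^-1` [set x : R | x = 0].
Let Ec : closed E.
Proof. by apply: preimage_closed; [move=> x _; exact: ch | exact: closed_eq]. Qed.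

Lemma itv_norm (c x : R) : `[-c, c]%classic x <-> `|x| <= c.
Proof. by rewrite /= in_itv /= ler_norml. Qed.

Lemma sum3_eq0 (F : 'I_N1 -> 'I_J -> 'I_N3 -> R) :
  \sum_i \sum_j \sum_k F i j k ^+ 2 = 0 -> forall i j k, F i j k = 0.
Proof.
move=> h0 i j k.
have g2' : forall i j, 0 <= \sum_k F i j k ^+ 2 by move=> *; apply: sumr_ge0 => *; exact: sqr_ge0.
have g1' : forall i, 0 <= \sum_j \sum_k F i j k ^+ 2 by move=> *; apply: sumr_ge0 => *; exact: g2'.
have h1 := @psumr_eq0P _ _ predT _ (fun i _ => g1' i) h0 i erefl.
have h2 := @psumr_eq0P _ _ predT _ (fun j _ => g2' i j) h1 j erefl.
have h3 := @psumr_eq0P _ _ predT _ (fun k _ => sqr_ge0 (F i j k)) h2 k erefl.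
by apply/eqP; rewrite -sqrf_eq0 h3.
Qed.

Let goodE v : (K `&` E) v -> good (g1 v) (g2 v) (g3 v).
Proof.
move=> [hK hE]; split.
  move=> i j k; apply/eqP; rewrite -subr_eq0; apply/eqP.
  exact: (sum3_eq0 hE).
by split; [|split] => l i; apply/itv_norm; apply: hK.
Qed.

Let toV (b1 : 'I_L -> 'I_N1 -> R) (b2 : 'I_L -> 'I_J -> R) (b3 : 'I_L -> 'I_N3 -> R) : 'rV['rV[R]_M]_L :=
  \row_(l < L) \row_(t < M)
    match fintype.split t with
    | inl t' => match fintype.split t' with inl i => b1 l i | inr j => b2 l j end
    | inr k => b3 l k end.

Let toV1 b1 b2 b3 : g1 (toV b1 b2 b3) = b1.
Proof. by apply: funext => l; apply: funext => i; rewrite /g1 /toV !mxE !split_lsh. Qed.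
Let toV2 b1 b2 b3 : g2 (toV b1 b2 b3) = b2.
Proof. by apply: funext => l; apply: funext => i; rewrite /g2 /toV !mxE split_lsh split_rsh. Qed.
Let toV3 b1 b2 b3 : g3 (toV b1 b2 b3) = b3.
Proof. by apply: funext => l; apply: funext => i; rewrite /g3 /toV !mxE split_rsh. Qed.

Let good_toV b1 b2 b3 : good b1 b2 b3 -> (K `&` E) (toV b1 b2 b3).
Proof.
move=> [hd [h1 [h2 h3]]]; split.
  move=> l t; apply/itv_norm; rewrite /toV !mxE.
  case: (fintype.split t) => [t'|k] //; case: (fintype.split t') => [i|j] //.
rewrite /E /= /h toV1 toV2 toV3 big1 // => i _; rewrite big1 // => j _; rewrite big1 // => k _.
by rewrite -hd subrr expr2 mul0r.
Qed.

Lemma good_min : (exists a1 a2 a3, good a1 a2 a3) ->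
  exists a1 a2 a3, good a1 a2 a3 /\
    forall b1 b2 b3, good b1 b2 b3 -> dcost a1 a2 a3 <= dcost b1 b2 b3.
Proof.
move=> [b1 [b2 [b3 hb]]].
have ne : (K `&` E) !=set0 by exists (toV b1 b2 b3); exact: good_toV.
have [c cin cmin] := compact_EVT_min ne (compact_closedI Kc Ec)
  (continuous_subspaceT cf).
exists (g1 c), (g2 c), (g3 c); split; first by apply: goodE; rewrite inE in cin.
move=> d1 d2 d3 hd.
have := cmin (toV d1 d2 d3); rewrite /f toV1 toV2 toV3; apply.
by rewrite inE; exact: good_toV.
Qed.

End Topo.

Section Reduce.
Variables (R : realType) (N1 J N3 : nat) (X : tensor3 R N1 J N3).

Local Notation T3 := ('I_N1 * 'I_J * 'I_N3)%type.
Local Notation n0 := #|{: T3}|.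

Definition padf n r (A : 'I_r -> 'I_n -> R) : 'I_r.+1 -> 'I_n -> R :=
  fun l => if unlift ord0 l is Some l' then A l' else fun _ => 0.

Lemma padf_lift n r (A : 'I_r -> 'I_n -> R) i : padf A (lift ord0 i) = A i.
Proof. by rewrite /padf liftK. Qed.
Lemma padf0 n r (A : 'I_r -> 'I_n -> R) : padf A ord0 = fun _ => 0.
Proof. by rewrite /padf unlift_none. Qed.

Lemma pad1 r (a1 : 'I_r -> 'I_N1 -> R) a2 a3 :
  is_cp_decomp X a1 a2 a3 ->
  is_cp_decomp X (padf a1) (padf a2) (padf a3) /\
  dcost (padf a1) (padf a2) (padf a3) = dcost a1 a2 a3.
Proof.
move=> hd; split.
  move=> i j k; rewrite hd big_ord_recl !padf0 !mul0r add0r.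
  by apply: eq_bigr => l _; rewrite !padf_lift.
rewrite /dcost big_ord_recl !padf0 vnorm2_0 !mul0r add0r.
by apply: eq_bigr => l _; rewrite !padf_lift.
Qed.

Lemma padn n r (a1 : 'I_r -> 'I_N1 -> R) a2 a3 :
  is_cp_decomp X a1 a2 a3 ->
  exists (b1 : 'I_(n + r) -> 'I_N1 -> R) b2 b3,
    is_cp_decomp X b1 b2 b3 /\ dcost b1 b2 b3 = dcost a1 a2 a3.
Proof.
elim: n => [|n IH] hd; first by exists a1, a2, a3.
have [b1 [b2 [b3 [hb hc]]]] := IH hd.
have [hp hpc] := pad1 hb.
by exists (padf b1), (padf b2), (padf b3); split => //; rewrite hpc.
Qed.

Lemma padto m r (a1 : 'I_r -> 'I_N1 -> R) a2 a3 : (r <= m)%N ->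
  is_cp_decomp X a1 a2 a3 ->
  exists (b1 : 'I_m -> 'I_N1 -> R) b2 b3,
    is_cp_decomp X b1 b2 b3 /\ dcost b1 b2 b3 = dcost a1 a2 a3.
Proof.
move=> hrm hd; have := padn (m - r) hd; by rewrite subnK.
Qed.

Lemma remove0 r (a1 : 'I_r.+1 -> 'I_N1 -> R) a2 a3 k :
  (forall i, a1 k i = 0) -> is_cp_decomp X a1 a2 a3 ->
  is_cp_decomp X (fun l => a1 (lift k l)) (fun l => a2 (lift k l)) (fun l => a3 (lift k l)) /\
  dcost (fun l => a1 (lift k l)) (fun l => a2 (lift k l)) (fun l => a3 (lift k l)) = dcost a1 a2 a3.
Proof.
move=> h0 hd.
have e : a1 k = fun _ => 0 by apply: funext => i; exact: h0.
split.
  move=> i j kk; rewrite hd (bigD1_ord k) //= e !mul0r add0r.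
  by [].
by rewrite /dcost [RHS](bigD1_ord k) //= e vnorm2_0 !mul0r add0r.
Qed.

Lemma lin_dep r (a1 : 'I_r -> 'I_N1 -> R) (a2 : 'I_r -> 'I_J -> R) (a3 : 'I_r -> 'I_N3 -> R) :
  (n0 < r)%N ->
  exists al : 'I_r -> R, (exists l, al l != 0) /\
    forall i j k, \sum_l al l * (a1 l i * a2 l j * a3 l k) = 0.
Proof.
move=> hr.
pose W : 'M[R]_(r, n0) := \matrix_(l, t)
   (a1 l (enum_val t).1.1 * a2 l (enum_val t).1.2 * a3 l (enum_val t).2).
have hk : (0 < \rank (kermx W))%N.
  by rewrite mxrank_ker subn_gt0 (leq_ltn_trans (rank_leq_col W)).
have hK : kermx W != 0 by rewrite -mxrank_eq0 -lt0n.
have [p hp] : exists p, row p (kermx W) != 0.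
  apply/existsP; move: hK; apply: contraR => /existsPn hall.
  by apply/eqP/row_matrixP => p; rewrite row0; apply/eqP; move/negPn: (hall p).
have hu : row p (kermx W) *m W = 0 by apply/sub_kermxP; exact: row_sub.
exists (fun l => row p (kermx W) ord0 l); split.
  apply/existsP; move: hp; apply: contraR => /existsPn hall.
  apply/eqP/matrixP => a l; rewrite ord1 [RHS]mxE.
  by apply/eqP; move/negPn: (hall l).
move=> i j k.
have := congr1 (fun M : 'M[R]_(1, n0) => M ord0 (enum_rank (i, j, k))) hu.
rewrite !mxE => h0; rewrite -[RHS]h0; apply: eq_bigr => l _; rewrite !mxE enum_rankK.
by [].
Qed.

End Reduce.

Section Reduce2.
Variables (R : realType) (N1 J N3 : nat) (X : tensor3 R N1 J N3).

Local Notation T3 := ('I_N1 * 'I_J * 'I_N3)%type.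
Local Notation n0 := #|{: T3}|.

Lemma argmax_ex n (b : 'I_n.+1 -> R) : exists k, forall l, b l <= b k.
Proof.
case: (@arg_maxP _ _ _ ord0 xpredT b erefl) => k _ hk.
by exists k => l; apply: hk.
Qed.

Lemma step r (a1 : 'I_r.+1 -> 'I_N1 -> R) a2 a3 : (n0 < r.+1)%N ->
  is_cp_decomp X a1 a2 a3 ->
  exists (b1 : 'I_r -> 'I_N1 -> R) b2 b3,
    is_cp_decomp X b1 b2 b3 /\ dcost b1 b2 b3 <= dcost a1 a2 a3.
Proof.
move=> hr hd.
have [al [[l1 hl1] hal]] := lin_dep a1 a2 a3 hr.
pose c l := vnorm2 (a1 l) * vnorm2 (a2 l) * vnorm2 (a3 l).
have cge l : 0 <= c l by rewrite /c !mulr_ge0 ?vnorm2_ge0.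
pose S := \sum_l al l * c l.
have [be [hbe [hS [l0 hl0]]]] : exists be : 'I_r.+1 -> R,
   (forall i j k, \sum_l be l * (a1 l i * a2 l j * a3 l k) = 0) /\
   0 <= \sum_l be l * c l /\ exists l0, 0 < be l0.
  case: (pselect ((exists l, 0 < al l) /\ 0 <= S)) => [[hp hs]|hn1].
    by exists al.
  case: (pselect ((exists l, al l < 0) /\ S <= 0)) => [[[l hn] hs]|hn2].
    exists (fun l => - al l); split.
      by move=> i j k; under eq_bigr do rewrite mulNr; rewrite sumrN hal oppr0.
    split; last by exists l; rewrite oppr_gt0.
    by under eq_bigr do rewrite mulNr; rewrite sumrN oppr_ge0.
  exfalso.
  have [hS0|hS0] := leP 0 S.
    have np : forall l, al l <= 0.
      by move=> l; rewrite leNgt; apply/negP => h; apply: hn1; split => //; exists l.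
    have hSle : S <= 0.
      by rewrite /S; apply: sumr_le0 => l _; rewrite mulr_le0_ge0.
    have nn : forall l, 0 <= al l.
      by move=> l; rewrite leNgt; apply/negP => h; apply: hn2; split => //; exists l.
    by move: hl1; rewrite eq_le np nn.
  have nn : forall l, 0 <= al l.
    by move=> l; rewrite leNgt; apply/negP => h; apply: hn2; split; [exists l|exact: ltW].
  have : 0 <= S by rewrite /S; apply: sumr_ge0 => l _; rewrite mulr_ge0.
  by rewrite leNgt hS0.
have [k hk] := argmax_ex be.
have bk0 : 0 < be k by apply: lt_le_trans (hk l0).
pose g l := 1 - be l / be k.
have gge l : 0 <= g l by rewrite /g subr_ge0 ler_pdivrMr // mul1r.
have gk : g k = 0 by rewrite /g divff ?gt_eqF // subrr.
pose a1' l i := g l * a1 l i.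
have hd' : is_cp_decomp X a1' a2 a3.
  move=> i j kk; rewrite hd.
  have -> : \sum_l a1' l i * a2 l j * a3 l kk =
      \sum_l a1 l i * a2 l j * a3 l kk - (be k)^-1 * \sum_l be l * (a1 l i * a2 l j * a3 l kk).
    rewrite mulr_sumr -sumrB; apply: eq_bigr => l _; rewrite /a1' /g; ring.
  by rewrite hbe mulr0 subr0.
have hc' : dcost a1' a2 a3 <= dcost a1 a2 a3.
  have -> : dcost a1' a2 a3 = dcost a1 a2 a3 - (be k)^-1 * \sum_l be l * c l.
    rewrite /dcost mulr_sumr -sumrB; apply: eq_bigr => l _.
    rewrite /a1' vnorm2_scale ger0_norm // /g /c; ring.
  by rewrite lerBlDr lerDl mulr_ge0 // invr_ge0 ltW.
have hz : forall i, a1' k i = 0 by move=> i; rewrite /a1' gk mul0r.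
have [hr' hrc] := remove0 hz hd'.
exists (fun l => a1' (lift k l)), (fun l => a2 (lift k l)), (fun l => a3 (lift k l)).
by split => //; rewrite hrc.
Qed.

Lemma reduce r (a1 : 'I_r -> 'I_N1 -> R) a2 a3 :
  is_cp_decomp X a1 a2 a3 ->
  exists (b1 : 'I_n0 -> 'I_N1 -> R) b2 b3,
    is_cp_decomp X b1 b2 b3 /\ dcost b1 b2 b3 <= dcost a1 a2 a3.
Proof.
elim: r a1 a2 a3 => [|r IH] a1 a2 a3 hd.
  have [b1 [b2 [b3 [hb hc]]]] := padto (leq0n n0) hd.
  by exists b1, b2, b3; rewrite hc.
have [hle|hlt] := leqP r.+1 n0.
  have [b1 [b2 [b3 [hb hc]]]] := padto hle hd.
  by exists b1, b2, b3; rewrite hc.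
have [b1 [b2 [b3 [hb hc]]]] := step hlt hd.
have [d1 [d2 [d3 [hdd hdc]]]] := IH _ _ _ hb.
by exists d1, d2, d3; split => //; apply: le_trans hc.
Qed.

End Reduce2.

Section Assemble.
Variables (R : realType) (N1 J N3 : nat) (X : tensor3 R N1 J N3).

Local Notation T3 := ('I_N1 * 'I_J * 'I_N3)%type.
Local Notation n0 := #|{: T3}|.

Lemma term_le r (a1 : 'I_r -> 'I_N1 -> R) (a2 : 'I_r -> 'I_J -> R) (a3 : 'I_r -> 'I_N3 -> R) l :
  vnorm2 (a1 l) * vnorm2 (a2 l) * vnorm2 (a3 l) <= dcost a1 a2 a3.
Proof.
rewrite /dcost (bigD1 l) //= lerDl; apply: sumr_ge0 => m _.
by rewrite !mulr_ge0 ?vnorm2_ge0.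
Qed.

Lemma normalize L (a1 : 'I_L -> 'I_N1 -> R) a2 a3 : is_cp_decomp X a1 a2 a3 ->
  exists (b1 : 'I_L -> 'I_N1 -> R) (b2 : 'I_L -> 'I_J -> R) (b3 : 'I_L -> 'I_N3 -> R),
   is_cp_decomp X b1 b2 b3 /\ dcost b1 b2 b3 = dcost a1 a2 a3 /\
   (forall l i, `|b1 l i| <= dcost a1 a2 a3) /\ (forall l j, `|b2 l j| <= 1) /\
   (forall l k, `|b3 l k| <= 1).
Proof.
move=> hd.
pose q l := vnorm2 (a2 l). pose w l := vnorm2 (a3 l).
pose z l := q l * w l == 0.
pose b1 l i := if z l then 0 else q l * w l * a1 l i.
pose b2 l j := if z l then 0 else (q l)^-1 * a2 l j.
pose b3 l k := if z l then 0 else (w l)^-1 * a3 l k.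
have qge l : 0 <= q l by exact: vnorm2_ge0.
have wge l : 0 <= w l by exact: vnorm2_ge0.
have n2 l : vnorm2 (b2 l) = if z l then 0 else 1.
  rewrite /b2; case hz: (z l); first exact: vnorm2_0.
  move/negbT: hz; rewrite /z mulf_eq0 negb_or => /andP[hq hw].
  by rewrite vnorm2_scale ger0_norm ?invr_ge0 // mulVf.
have n3 l : vnorm2 (b3 l) = if z l then 0 else 1.
  rewrite /b3; case hz: (z l); first exact: vnorm2_0.
  move/negbT: hz; rewrite /z mulf_eq0 negb_or => /andP[hq hw].
  by rewrite vnorm2_scale ger0_norm ?invr_ge0 // mulVf.
have n1 l : vnorm2 (b1 l) = if z l then 0 else vnorm2 (a1 l) * q l * w l.
  rewrite /b1; case hz: (z l); first exact: vnorm2_0.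
  by rewrite vnorm2_scale ger0_norm ?mulr_ge0 // mulrC mulrA.
have term l : vnorm2 (b1 l) * vnorm2 (b2 l) * vnorm2 (b3 l) =
              vnorm2 (a1 l) * vnorm2 (a2 l) * vnorm2 (a3 l).
  rewrite n1 n2 n3; case hz: (z l); last by rewrite !mulr1.
  by rewrite !mul0r -mulrA -/(q l) -/(w l) (eqP hz) mulr0.
have hc : dcost b1 b2 b3 = dcost a1 a2 a3 by apply: eq_bigr => l _; exact: term.
exists b1, b2, b3; split; [|split => //; split; [|split]].
- move=> i j k; rewrite hd; apply: eq_bigr => l _.
  rewrite /b1 /b2 /b3; case hz: (z l).
    move: hz; rewrite /z mulf_eq0 => /orP[] /eqP /vnorm2_eq0 h.
      by rewrite h mulr0 mul0r !mul0r.
    by rewrite h mulr0 !mul0r.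
  move/negbT: hz; rewrite /z mulf_eq0 negb_or => /andP[hq hw].
  by field; rewrite hq hw.
- move=> l i; apply: le_trans (coord_le_vnorm2 _ i) _; rewrite n1.
  case: (z l); first exact: dcost_ge0.
  exact: term_le.
- move=> l j; apply: le_trans (coord_le_vnorm2 _ j) _; rewrite n2.
  by case: (z l).
- move=> l k; apply: le_trans (coord_le_vnorm2 _ k) _; rewrite n3.
  by case: (z l).
Qed.

Lemma trivial_decomp : exists (a1 : 'I_n0 -> 'I_N1 -> R) a2 a3, is_cp_decomp X a1 a2 a3.
Proof.
exists (fun t i => (i == (enum_val t).1.1)%:R * X (enum_val t).1.1 (enum_val t).1.2 (enum_val t).2),
       (fun t j => (j == (enum_val t).1.2)%:R), (fun t k => (k == (enum_val t).2)%:R).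
move=> i j k; rewrite (bigD1 (enum_rank (i, j, k))) //= enum_rankK /= !eqxx !mulr1 mul1r.
rewrite big1 ?addr0 // => t ht.
have : enum_val t != (i, j, k) by apply: contra ht => /eqP <-; rewrite enum_valK.
case: (enum_val t) => [[i' j'] k'] /= hne.
have [ei|ei] := eqVneq i i'; last by rewrite !mul0r.
have [ej|ej] := eqVneq j j'; last by rewrite mulr0 mul0r.
have [ek|ek] := eqVneq k k'; last by rewrite mulr0.
by move: hne; rewrite ei ej ek eqxx.
Qed.

Lemma nuclear_attained :
  exists r (a1 : 'I_r -> 'I_N1 -> R) (a2 : 'I_r -> 'I_J -> R) (a3 : 'I_r -> 'I_N3 -> R),
    is_cp_decomp X a1 a2 a3 /\ dcost a1 a2 a3 = tnuclear X.
Proof.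
have [t1 [t2 [t3 ht]]] := trivial_decomp.
pose c0 := dcost t1 t2 t3.
have c0ge : 0 <= c0 by exact: dcost_ge0.
pose Cb := c0 + 1.
have G : forall r (a1 : 'I_r -> 'I_N1 -> R) a2 a3, is_cp_decomp X a1 a2 a3 ->
    dcost a1 a2 a3 <= c0 ->
    exists (b1 : 'I_n0 -> 'I_N1 -> R) (b2 : 'I_n0 -> 'I_J -> R) (b3 : 'I_n0 -> 'I_N3 -> R),
      good X Cb b1 b2 b3 /\ dcost b1 b2 b3 <= dcost a1 a2 a3.
  move=> r a1 a2 a3 hd hc.
  have [b1 [b2 [b3 [hb hbc]]]] := reduce hd.
  have [d1 [d2 [d3 [hdd [hdc [h1 [h2 h3]]]]]]] := normalize hb.
  exists d1, d2, d3; split; last by rewrite hdc.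
  have h1C : dcost b1 b2 b3 <= Cb.
    by apply: le_trans hbc _; apply: le_trans hc _; rewrite /Cb lerDl.
  have h1' : 1 <= Cb by rewrite /Cb lerDr.
  split => //; split; [|split] => l i.
  - exact: le_trans (h1 l i) h1C.
  - exact: le_trans (h2 l i) h1'.
  - exact: le_trans (h3 l i) h1'.
have [b1 [b2 [b3 [hb hbc]]]] := G _ _ _ _ ht (lexx _).
have [m1 [m2 [m3 [hm hmin]]]] := good_min (ex_intro _ b1 (ex_intro _ b2 (ex_intro _ b3 hb))).
exists n0, m1, m2, m3; split; first exact: hm.1.
apply/le_anti; rewrite (tnuc_le hm.1) andbT.
apply: lb_le_inf.
  by exists c0; exists n0, t1, t2, t3.
move=> c [r [a1 [a2 [a3 [hd ->]]]]].
have [hle|hlt] := leP (dcost a1 a2 a3) c0.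
  have [d1 [d2 [d3 [hdd hdc]]]] := G _ _ _ _ hd hle.
  exact: le_trans (hmin _ _ _ hdd) hdc.
apply: le_trans (hmin _ _ _ hb) _.
exact: le_trans hbc (ltW hlt).
Qed.

End Assemble.

Section Part2.
Variable R : realType.



Lemma part2 N1 J N3 (X : tensor3 R N1 J N3) :
  exists (D : nat) (U : 'M[R]_(N1, D)) (V : 'M[R]_(N3, D)) (Rj : 'I_J -> 'M[R]_D),
      is_factorization X U V Rj /\ objective U V Rj = tnuclear X.
Proof.
have [r [a1 [a2 [a3 [hX hc]]]]] := @nuclear_attained R N1 J N3 X.
have [hJ|hJ] := eqVneq J 0%N.
  exists 0%N, 0, 0, (fun _ => 0); split.
    by split => j; subst J; case: j.
  have s0 : Num.sqrt (J%:R : R) = 0 by rewrite hJ sqrtr0.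
  rewrite /objective s0 mulr0 invr0 mul0r -hc /dcost big1 // => l _.
  by rewrite (vnorm2_J0 _ hJ) mulr0 mul0r.
set s := Num.sqrt (J%:R : R).
have s0 : 0 < s by rewrite sqrtr_gt0 ltr0n lt0n.
pose p l := vnorm2 (a1 l). pose q l := vnorm2 (a2 l). pose w l := vnorm2 (a3 l).
pose m l := p l * q l * w l.
pose x l := Num.sqrt (m l / s).
pose al l := if m l == 0 then 0 else x l / p l.
pose be l := if m l == 0 then 0 else s / q l.
pose ga l := if m l == 0 then 0 else x l / w l.
pose U := \matrix_(i < N1, l < r) (al l * a1 l i).
pose V := \matrix_(k < N3, l < r) (ga l * a3 l k).
pose Rj := fun j : 'I_J => diag_mx (\row_(l < r) (be l * a2 l j)).
have m0 l : m l = 0 -> forall i j k, a1 l i * a2 l j * a3 l k = 0.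
  move=> /eqP; rewrite /m !mulf_eq0 => /orP[/orP[]|] /eqP /vnorm2_eq0 h i j k.
  - by rewrite h !mul0r.
  - by rewrite h mulr0 mul0r.
  - by rewrite h mulr0.
have pge l : 0 <= p l by exact: vnorm2_ge0.
have qge l : 0 <= q l by exact: vnorm2_ge0.
have wge l : 0 <= w l by exact: vnorm2_ge0.
have mge l : 0 <= m l by rewrite !mulr_ge0.
have hx l : x l ^+ 2 = m l / s by rewrite sqr_sqrtr // divr_ge0 // ltW.
have key l : m l != 0 -> al l * be l * ga l = 1.
  move=> hm; rewrite /al /be /ga !ifN //.
  have := hm; rewrite /m !mulf_eq0 !negb_or => /andP[/andP[hp hq] hw].
  have -> : x l / p l * (s / q l) * (x l / w l) = x l ^+ 2 * s / m l.
    by rewrite /m; field; rewrite hp hq hw.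
  by rewrite hx; field; rewrite hm gt_eqF.
exists r, U, V, Rj; split.
  split => [j|j]; first exact: diag_mx_is_diag.
  apply/matrixP => i k; rewrite /slice mxE mul_mx_diag mxE hX.
  apply: eq_bigr => l _; rewrite !mxE.
  have [hm|hm] := eqVneq (m l) 0.
    by rewrite m0 // /al hm eqxx !mul0r.
  transitivity (al l * be l * ga l * (a1 l i * a2 l j * a3 l k)).
    by rewrite key // mul1r.
  by ring.
have hdiag : forall j, is_diag_mx (Rj j) by move=> j; exact: diag_mx_is_diag.
rewrite (obj_formula _ _ hdiag) -hc /dcost mulr_sumr; apply: eq_bigr => l _.
have cU : colnorm U l = al l * p l.
  rewrite /colnorm (_ : (fun i => U i l) = (fun i => al l * a1 l i)); last first.
    by apply: funext => i; rewrite mxE.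
  rewrite vnorm2_scale ger0_norm // /al; case: ifP => // _.
  by rewrite divr_ge0 ?sqrtr_ge0.
have cV : colnorm V l = ga l * w l.
  rewrite /colnorm (_ : (fun k => V k l) = (fun k => ga l * a3 l k)); last first.
    by apply: funext => k; rewrite mxE.
  rewrite vnorm2_scale ger0_norm // /ga; case: ifP => // _.
  by rewrite divr_ge0 ?sqrtr_ge0.
have cR : rnorm Rj l = be l * q l.
  rewrite /rnorm (_ : (fun j => Rj j l l) = (fun j => be l * a2 l j)); last first.
    by apply: funext => j; rewrite /Rj mxE eqxx mulr1n mxE.
  rewrite vnorm2_scale ger0_norm // /be; case: ifP => // _.
  by rewrite divr_ge0 ?sqrtr_ge0 // ltW.
rewrite /Fterm cU cV cR.
have [hm|hm] := eqVneq (m l) 0.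
  rewrite /al /be /ga hm eqxx !mul0r expr2 !mul0r !mulr0 !addr0 mulr0.
  by rewrite -[RHS]/(m l) hm.
have := hm; rewrite /m !mulf_eq0 !negb_or => /andP[/andP[hp hq] hw].
rewrite /al /be /ga !ifN //.
have e1 : x l / p l * p l = x l by rewrite divfK.
have e2 : s / q l * q l = s by rewrite divfK.
have e3 : x l / w l * w l = x l by rewrite divfK.
rewrite e1 e2 e3.
have -> : x l ^+ 2 * s ^+ 2 + s ^+ 2 * x l ^+ 2 + x l ^+ 2 * s ^+ 2 + s ^+ 2 * x l ^+ 2
   = 4 * s * (x l ^+ 2 * s) by ring.
rewrite hx -[RHS]/(m l) -/s; field; by rewrite gt_eqF.
Qed.

End Part2.

Theorem theorem1 (R : realType) (N1 J N3 : nat) (X : tensor3 R N1 J N3) :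
  (* every admissible factorization has objective >= ||X||_* *)
  (forall (D : nat) (U : 'M[R]_(N1, D)) (V : 'M[R]_(N3, D)) (Rj : 'I_J -> 'M[R]_D),
      is_factorization X U V Rj -> tnuclear X <= objective U V Rj) /\
  (* the value ||X||_* is attained, so the minimum exists and equals ||X||_* *)
  (exists (D : nat) (U : 'M[R]_(N1, D)) (V : 'M[R]_(N3, D)) (Rj : 'I_J -> 'M[R]_D),
      is_factorization X U V Rj /\ objective U V Rj = tnuclear X) /\
  (* every minimizer is balanced column-wise *)
  (forall (D : nat) (U : 'M[R]_(N1, D)) (V : 'M[R]_(N3, D)) (Rj : 'I_J -> 'M[R]_D),
      is_factorization X U V Rj -> objective U V Rj = tnuclear X ->
      forall d : 'I_D,
        colnorm U d * rnorm Rj d = Num.sqrt (J%:R) * colnorm V d /\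
        colnorm V d * rnorm Rj d = Num.sqrt (J%:R) * colnorm U d).
Proof.
split; last split.
- move=> D U V Rj hf; apply: le_trans (cost_le_obj hf).
  exact: (tnuc_le (fact_decomp hf)).
- exact: part2.
- move=> D U V Rj hf ho d; exact: (balanced hf ho d).
Qed.
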